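(* For each of the following pairs $(X,i)$ there is no infinite binary word $\mathbf{x}$ with $p_i\,\mu(\mathbf{x})\in X$: $(B,2)$, $(B,4)$, $(D,2)$, $(D,4)$, $(C,1)$, $(C,2)$, $(C,4)$, $(E,2)$, $(E,3)$, $(E,4)$, $(F,0)$, $(F,1)$, $(F,2)$, $(F,4)$, $(J,2)$, $(J,3)$, $(J,4)$, $(K,2)$, $(K,3)$, $(K,4)$, $(I,0)$, $(I,2)$, $(I,3)$, $(I,4)$, $(G,1)$, $(G,2)$, $(G,4)$, $(H,1)$, $(H,2)$, $(H,4)$.
   Context: $\Sigma=\{0,1\}$. An overlap is a word $axaxa$ with $a\in\Sigma$, $x\in\Sigma^*$; a word is overlap-free if it has no overlap as a factor. $\mathcal{O}$ is the set of right-infinite binary overlap-free words, and $\mu$ is the morphism $0\mapsto01$, $1\mapsto10$. $p_0=\epsilon$, $p_1=0$, $p_2=00$, $p_3=1$, $p_4=11$. Subsets of $\Sigma^\omega$: $A=\mathcal{O}$; $B=\{\mathbf{x}: 1\mathbf{x}\in\mathcal{O}\}$; $C=\{\mathbf{x}: 1\mathbf{x}\in\mathcal{O}$ and $\mathbf{x}$ begins with $101\}$; $D=\{\mathbf{x}: 0\mathbf{x}\in\mathcal{O}\}$; $E=\{\mathbf{x}: 0\mathbf{x}\in\mathcal{O}$ and $\mathbf{x}$ begins with $010\}$; $F=\{\mathbf{x}: 0\mathbf{x}\in\mathcal{O}$ and $\mathbf{x}$ begins with $11\}$; $G=\{\mathbf{x}: 0\mathbf{x}\in\mathcal{O}$ and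 $\mathbf{x}$ begins with $1\}$; $H=\{\mathbf{x}: 1\mathbf{x}\in\mathcal{O}$ and $\mathbf{x}$ begins with $1\}$; $I=\{\mathbf{x}: 1\mathbf{x}\in\mathcal{O}$ and $\mathbf{x}$ begins with $00\}$; $J=\{\mathbf{x}: 1\mathbf{x}\in\mathcal{O}$ and $\mathbf{x}$ begins with $0\}$; $K=\{\mathbf{x}: 0\mathbf{x}\in\mathcal{O}$ and $\mathbf{x}$ begins with $0\}$. *)

(* Defs.v *)
From mathcomp Require Import all_boot.
Set Implicit Arguments. Unset Strict Implicit. Unset Printing Implicit Defensive.

(* Alphabet Sigma = {0,1} encoded as bool: 0 = false, 1 = true. *)
Definition iword := nat -> bool.

Definition segment (w : iword) (i n : nat) : seq bool := mkseq (fun k => w (i + k)) n.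

Definition ifactor (u : seq bool) (w : iword) : Prop := exists i, segment w i (size u) = u.

Definition overlap (a : bool) (x : seq bool) : seq bool := [:: a] ++ x ++ [:: a] ++ x ++ [:: a].

Definition overlap_free (w : iword) : Prop :=
  forall (a : bool) (x : seq bool), ~ ifactor (overlap a x) w.

Definition pcat (p : seq bool) (w : iword) : iword :=
  fun n => if n < size p then nth false p n else w (n - size p).

(* Thue-Morse morphism mu : 0 -> 01, 1 -> 10, extended to infinite words *)
Definition mu_letter (b : bool) : seq bool := [:: b; ~~ b].
Definition mu (w : iword) : iword := fun n => nth false (mu_letter (w n./2)) (odd n).

Definition begins_with (w : iword) (u : seq bool) : Prop := segment w 0 (size u) = u.

Definition p0 : seq bool := [::].
Definition p1 : seq bool := [:: false].
Definition p2 : seq bool := [:: false; false].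
Definition p3 : seq bool := [:: true].
Definition p4 : seq bool := [:: true; true].

Definition XA (w : iword) : Prop := overlap_free w.
Definition XB (w : iword) : Prop := overlap_free (pcat [:: true] w).
Definition XC (w : iword) : Prop := overlap_free (pcat [:: true] w) /\ begins_with w [:: true; false; true].
Definition XD (w : iword) : Prop := overlap_free (pcat [:: false] w).
Definition XE (w : iword) : Prop := overlap_free (pcat [:: false] w) /\ begins_with w [:: false; true; false].
Definition XF (w : iword) : Prop := overlap_free (pcat [:: false] w) /\ begins_with w [:: true; true].
Definition XG (w : iword) : Prop := overlap_free (pcat [:: false] w) /\ begins_with w [:: true].
Definition XH (w : iword) : Prop := overlap_free (pcat [:: true] w) /\ begins_with w [:: true].
Definition XI (w : iword) : Prop := overlap_free (pcat [:: true] w) /\ begins_with w [:: false; false].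
Definition XJ (w : iword) : Prop := overlap_free (pcat [:: true] w) /\ begins_with w [:: false].
Definition XK (w : iword) : Prop := overlap_free (pcat [:: false] w) /\ begins_with w [:: false].

Definition no_word (X : iword -> Prop) (p : seq bool) : Prop :=
  ~ exists x : iword, X (pcat p (mu x)).

(* Main.v *)
Require Import Defs.
From mathcomp Require Import all_boot.
From Stdlib Require Import Lia.
Set Implicit Arguments. Unset Strict Implicit. Unset Printing Implicit Defensive.

Definition has_ov (s : seq bool) : bool :=
  has (fun i => has (fun p => (i + p.*2 + 1 <= size s) &&
     (drop i (take (i + p.*2 + 1) s) == overlap (nth false s i) (take p.-1 (drop i.+1 s))))
     (iota 1 (size s))) (iota 0 (size s)).

Lemma size_overlap a x : size (overlap a x) = (size x).+1.*2 + 1.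
Proof. rewrite /overlap /= !size_cat /= size_cat /= -addnn. rewrite -!plusE. lia. Qed.

Lemma segment_sub w N i L : i + L <= N ->
  segment w i L = drop i (take (i + L) (segment w 0 N)).
Proof.
move=> H. apply: (@eq_from_nth _ false).
  rewrite size_drop size_take /segment !size_mkseq.
  case: ltnP => H2; first by rewrite addKn.
  have -> : N = i + L by apply/eqP; rewrite eqn_leq H2 H.
  by rewrite addKn.
rewrite /segment size_mkseq => j Hj.
rewrite nth_drop nth_take ?ltn_add2l // nth_mkseq // nth_mkseq //.
by apply: leq_trans H; rewrite ltn_add2l.
Qed.

Lemma ov_sound w N : has_ov (segment w 0 N) -> ~ overlap_free w.
Proof.
move=> /hasP [i _ /hasP [p _ /andP [Hle /eqP He]]] Hof.
apply: (Hof (nth false (segment w 0 N) i) (take p.-1 (drop i.+1 (segment w 0 N)))).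
exists i. rewrite -He.
have Hs : size (drop i (take (i + p.*2 + 1) (segment w 0 N))) = p.*2 + 1.
  rewrite size_drop size_take /segment size_mkseq.
  rewrite /segment size_mkseq in Hle.
  case: ltnP => H2; first by rewrite -addnA addKn.
  have -> : N = i + p.*2 + 1 by apply/eqP; rewrite eqn_leq Hle H2.
  by rewrite -addnA addKn.
rewrite Hs -addnA. rewrite -addnA in Hle. apply: segment_sub.
by rewrite /segment size_mkseq in Hle.
Qed.

Lemma segment_pcat q v N : size q <= N ->
  segment (pcat q v) 0 N = q ++ segment v 0 (N - size q).
Proof.
move=> H. apply: (@eq_from_nth _ false).
  by rewrite size_cat /segment !size_mkseq subnKC.
rewrite /segment size_mkseq => j Hj.
rewrite nth_mkseq // nth_cat /pcat add0n.
case: ltnP => // H2. rewrite nth_mkseq ?add0n //. apply: ltn_sub2r => //. exact: leq_ltn_trans H2 Hj.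
Qed.

Lemma segment_mu x k : segment (mu x) 0 k.*2 = flatten (map mu_letter (mkseq x k)).
Proof.
elim: k => [|k IH] //.
have -> : segment (mu x) 0 k.+1.*2 = segment (mu x) 0 k.*2 ++ [:: mu x k.*2; mu x k.*2.+1].
  rewrite /segment doubleS -addn2 /mkseq iotaD map_cat /=. by rewrite !add0n.
rewrite IH /mkseq -[k.+1]addn1 iotaD map_cat map_cat flatten_cat /= add0n.
rewrite /mu /mu_letter /=.
by rewrite odd_double doubleK uphalf_double.
Qed.

Definition mw (l : seq bool) := flatten (map mu_letter l).

Lemma seg_main q p x k : segment (pcat q (pcat p (mu x))) 0 (size q + size p + k.*2)
   = q ++ p ++ mw (mkseq x k).
Proof.
rewrite -addnA segment_pcat ?leq_addr // addKn segment_pcat ?leq_addr // addKn.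
by rewrite segment_mu.
Qed.

Lemma seg_begin p x k (u : seq bool) : size u <= size p + k.*2 ->
  segment (pcat p (mu x)) 0 (size u) = take (size u) (p ++ mw (mkseq x k)).
Proof.
move=> H. have := seg_main [::] p x k. rewrite /= => <-.
rewrite (@segment_sub _ (size p + k.*2) 0 (size u)) // /segment.
rewrite drop0 !add0n; congr take; apply: eq_mkseq => j; by rewrite {2}/pcat /= subn0.
Qed.

Definition all2b (f : seq bool -> bool) :=
  all f [:: [:: false; false]; [:: false; true]; [:: true; false]; [:: true; true]].

Lemma mk2 (x : iword) : mkseq x 2 \in [:: [:: false; false]; [:: false; true]; [:: true; false]; [:: true; true]].
Proof. rewrite /mkseq /=. by case: (x 0); case: (x 1). Qed.

Definition chk (q p u : seq bool) : bool :=
  all2b (fun l => (take (size u) (p ++ mw l) != u) || has_ov (q ++ p ++ mw l)).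

Lemma chk_sound q p u : size u <= size p + 4 -> chk q p u ->
  ~ exists x, overlap_free (pcat q (pcat p (mu x))) /\ begins_with (pcat p (mu x)) u.
Proof.
move=> Hu Hc [x [Hof Hb]].
move: Hc => /allP /(_ _ (mk2 x)) /orP [].
  by rewrite /begins_with (@seg_begin _ _ 2) // in Hb; rewrite Hb eqxx.
move=> H; apply: (@ov_sound (pcat q (pcat p (mu x))) (size q + size p + 2.*2)) => //; by rewrite seg_main.
Qed.

Lemma chk_sound0 q p : chk q p [::] ->
  ~ exists x, overlap_free (pcat q (pcat p (mu x))).
Proof.
move=> Hc [x Hof]. apply: (@chk_sound q p [::]) => //. by exists x.
Qed.

Theorem mainTheorem3 :
  no_word XB p2 /\ no_word XB p4 /\ no_word XD p2 /\ no_word XD p4 /\ no_word XC p1 /\ no_word XC p2 /\ no_word XC p4 /\ no_word XE p2 /\ no_word XE p3 /\ no_word XE p4 /\ no_word XF p0 /\ no_word XF p1 /\ no_word XF p2 /\ no_word XF p4 /\ no_word XJ p2 /\ no_word XJ p3 /\ no_word XJ p4 /\ no_word XK p2 /\ no_word XK p3 /\ no_word XK p4 /\ no_word XI p0 /\ no_word XI p2 /\ no_word XI p3 /\ no_word XI p4 /\ no_word XG p1 /\ no_word XG p2 /\ no_word XG p4 /\ no_word XH p1 /\ no_word XH p2 /\ no_word XH p4.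
Proof.
rewrite /no_word /XB /XC /XD /XE /XF /XG /XH /XI /XJ /XK.
repeat split; first [ apply: chk_sound0; by vm_compute | apply: chk_sound; by vm_compute ].
Qed.
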